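(* Let $X,Y_1,Y_2$ be Hilbert spaces and $\mathcal A_i:Y_i\to X$, $i=1,2$, bounded linear operators. Suppose $\xi\in\operatorname{ran}\mathcal A_1$ but $\xi\notin\operatorname{ran}\mathcal A_2$. For $\alpha>0$ let $$\eta_\alpha:=(\mathcal A_2\mathcal A_2^*+\alpha I)^{-1}[\xi],\qquad\xi_\alpha:=\frac{\eta_\alpha}{\langle\xi,\eta_\alpha\rangle^{3/4}}.$$ Then $\langle\xi,\eta_\alpha\rangle>0$, $\lim_{\alpha\to0+}\|\mathcal A_1^*[\xi_\alpha]\|=\infty$ and $\lim_{\alpha\to0+}\mathcal A_2^*[\xi_\alpha]=0$. *)

(* Defs.v *)
From HB Require Import structures.
From mathcomp Require Import all_boot all_order all_algebra.
From mathcomp Require Import all_classical all_reals all_analysis.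
Import Order.TTheory GRing.Theory Num.Theory.
Set Implicit Arguments. Unset Strict Implicit. Unset Printing Implicit Defensive.
Local Open Scope ring_scope.

(* A (real) inner product on a normed space V that induces its norm.
   A Hilbert space is a complete normed space (completeNormedModType R)
   equipped with such an inner product. *)
Record inner_product (R : realType) (V : normedModType R) := InnerProduct {
  ip :> V -> V -> R;
  ip_sym : forall x y, ip x y = ip y x;
  ip_linearl : forall (a : R) (x y z : V), ip (a *: x + y) z = a * ip x z + ip y z;
  ip_norm : forall x, ip x x = `|x| ^+ 2
}.

Definition is_adjoint (R : realType) (X Y : normedModType R)
  (ipX : inner_product X) (ipY : inner_product Y) (A : Y -> X) (As : X -> Y) : Prop :=
  forall (y : Y) (x : X), ipX (A y) x = ipY y (As x).

(* Main.v *)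
Require Import Defs.
From HB Require Import structures.
From mathcomp Require Import all_boot all_order all_algebra.
From mathcomp Require Import all_classical all_reals all_analysis.
From mathcomp Require Import ring lra.
Import Order.TTheory GRing.Theory Num.Theory.
Local Open Scope ring_scope.
Local Open Scope classical_set_scope.

Section IP.
Variables (R : realType) (V : normedModType R) (ip : inner_product V).

Lemma ip0l z : ip 0 z = 0.
Proof.
have := ip_linearl ip 1 0 0 z; rewrite scaler0 addr0 mul1r; lra.
Qed.
Lemma ipDl x y z : ip (x + y) z = ip x z + ip y z.
Proof. by rewrite -[ip x z]mul1r -ip_linearl scale1r. Qed.
Lemma ipZl a x z : ip (a *: x) z = a * ip x z.
Proof. by have := ip_linearl ip a x 0 z; rewrite addr0 ip0l addr0. Qed.
Lemma ipNl x z : ip (- x) z = - ip x z.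
Proof. by rewrite -scaleN1r ipZl mulN1r. Qed.
Lemma ipBl x y z : ip (x - y) z = ip x z - ip y z.
Proof. by rewrite ipDl ipNl. Qed.
Lemma ip0r z : ip z 0 = 0.
Proof. by rewrite ip_sym ip0l. Qed.
Lemma ipDr x y z : ip z (x + y) = ip z x + ip z y.
Proof. by rewrite ip_sym ipDl !(ip_sym _ z). Qed.
Lemma ipZr a x z : ip z (a *: x) = a * ip z x.
Proof. by rewrite ip_sym ipZl ip_sym. Qed.
Lemma ipBr x y z : ip z (x - y) = ip z x - ip z y.
Proof. by rewrite ip_sym ipBl !(ip_sym _ z). Qed.
Lemma ip_eq0 x : ip x x = 0 -> x = 0.
Proof. by rewrite ip_norm => /eqP; rewrite sqrf_eq0 normr_eq0 => /eqP. Qed.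

Lemma ip_CS x y : ip x y <= `|x| * `|y|.
Proof.
have [->|y0] := eqVneq y 0; first by rewrite ip0r normr0 mulr0.
have N0 : 0 < `|y| ^+ 2 by rewrite exprn_gt0 // normr_gt0.
set t := ip x y / `|y| ^+ 2.
have h := ip_norm ip (x - t *: y).
have : 0 <= ip (x - t *: y) (x - t *: y) by rewrite h sqr_ge0.
rewrite !(ipBl, ipBr, ipZl, ipZr) (ip_sym _ y x) !ip_norm.
have tN : t * `|y| ^+ 2 = ip x y by rewrite /t mulfVK // gt_eqF.
rewrite tN => H.
have H2 : ip x y ^+ 2 <= (`|x| * `|y|) ^+ 2.
  rewrite exprMn.
  have H' : 0 <= (`|x| ^+ 2 - t * ip x y) * `|y| ^+ 2 by apply: mulr_ge0; lra.
  have e : t * ip x y * `|y| ^+ 2 = ip x y ^+ 2 by rewrite mulrAC tN expr2.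
  move: H'; rewrite mulrBl e; lra.
have c0 : 0 <= `|x| * `|y| by rewrite mulr_ge0.
move: H2 c0; rewrite !expr2; move: (`|x| * `|y|) (ip x y) => c b; nra.
Qed.
End IP.

Lemma adjZ (R : realType) (X Y : normedModType R)
  (ipX : inner_product X) (ipY : inner_product Y) (A : {linear Y -> X}) (As : X -> Y) :
  is_adjoint ipX ipY A As -> forall a x, As (a *: x) = a *: As x.
Proof.
move=> h a x; apply/eqP; rewrite -subr_eq0; apply/eqP; apply: (@ip_eq0 _ _ ipY).
set z := _ - _.
by rewrite {2}/z ipBr ipZr -!h ipZr subrr.
Qed.
Section Main.
Import numFieldNormedType.Exports.
Variables (R : realType) (X Y2 : completeNormedModType R)
  (ipX : inner_product X) (ipY2 : inner_product Y2)
  (A2 : {linear Y2 -> X}) (A2s : X -> Y2)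
  (hA2s : is_adjoint ipX ipY2 A2 A2s) (xi : X)
  (hran2 : ~ (exists y2 : Y2, A2 y2 = xi))
  (eta : R -> X)
  (heta : forall alpha : R, 0 < alpha ->
     A2 (A2s (eta alpha)) + alpha *: eta alpha = xi).

Let s a := ipX xi (eta a).
Let w a := A2s (eta a).

Lemma Ew a : 0 < a -> A2 (w a) = xi - a *: eta a.
Proof. by move=> ha; rewrite -(heta _ ha) addrK. Qed.

Lemma s_eq a : 0 < a -> s a = `|w a| ^+ 2 + a * `|eta a| ^+ 2.
Proof.
move=> ha; rewrite /s -{1}(heta _ ha) ipDl ipZl hA2s !ip_norm.
by [].
Qed.

Lemma s_gt0 a : 0 < a -> 0 < s a.
Proof.
move=> ha; rewrite s_eq //.
have [e0|e0] := eqVneq (eta a) 0.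
  exfalso; apply: hran2; exists (w a); rewrite -(heta _ ha) e0 scaler0 addr0.
  by rewrite /w e0.
have : 0 < a * `|eta a| ^+ 2 by rewrite mulr_gt0 // exprn_gt0 // normr_gt0.
have := sqr_ge0 `|w a|; lra.
Qed.

Lemma key a b : 0 < b -> b <= a -> `|w a - w b| ^+ 2 <= s b - s a.
Proof.
move=> hb hba; have ha : 0 < a by exact: lt_le_trans hba.
set D := w a - w b.
have HD : ipY2 D D = ipX (A2 D) (eta a - eta b).
  by rewrite [RHS]ipBr !hA2s -ipBr.
rewrite -(ip_norm ipY2) HD linearB /= Ew // Ew //.
have Hsb : s b = ipY2 (w a) (w b) + a * ipX (eta a) (eta b).
  by rewrite /s -{1}(heta _ ha) ipDl ipZl hA2s.
have Hsa : s a = ipY2 (w b) (w a) + b * ipX (eta b) (eta a).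
  by rewrite /s -{1}(heta _ hb) ipDl ipZl hA2s.
rewrite Hsa Hsb (ip_sym ipY2 (w b)) (ip_sym ipX (eta b) (eta a)).
have Hm : 0 <= ipX (eta a - eta b) (eta a - eta b) by rewrite ip_norm sqr_ge0.
move: Hm; rewrite !(ipBl, ipBr, ipZl, ipZr, ipDl, ipDr) (ip_sym ipX (eta b) (eta a)).
have := ip_norm ipX (eta a); have := ip_norm ipX (eta b).
have : 0 <= `|eta a| ^+ 2 by apply: sqr_ge0.
move: (ipX (eta a) (eta b)) (ipX xi (eta a)) (ipX xi (eta b)) (ipX (eta a) (eta a)) (ipX (eta b) (eta b)) (`|eta a| ^+ 2) (`|eta b| ^+ 2) => m p q na nb Na Nb.
nra.
Qed.

Lemma s_noninc a b : 0 < b -> b <= a -> s a <= s b.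
Proof.
move=> hb hba; have := @key a b hb hba; have := sqr_ge0 `|w a - w b|; lra.
Qed.

Lemma wdist a b : 0 < a -> 0 < b -> `|w a - w b| ^+ 2 <= `|s a - s b|.
Proof.
move=> ha hb; have [hab|hba] := leP b a.
  rewrite [X in _ <= X]distrC ger0_norm; first exact: key.
  by rewrite subr_ge0; exact: s_noninc.
rewrite [X in _ <= X]ger0_norm; last by rewrite subr_ge0; apply: s_noninc => //; exact: ltW.
rewrite distrC; apply: key => //; exact: ltW.
Qed.

Variable (hA2 : continuous A2).

Lemma s_unbounded M : exists a, 0 < a /\ M <= s a.
Proof.
case: (pselect (exists a, 0 < a /\ M <= s a)) => // nH; exfalso.
have H : forall a, 0 < a -> s a < M.
  by move=> a ha; rewrite ltNge; apply/negP => hM; apply: nH; exists a.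
pose an (n : nat) : R := n.+1%:R^-1.
have an_gt0 n : 0 < an n by rewrite /an invr_gt0 ltr0Sn.
pose u n := w (an n).
pose v n := s (an n).
have vnd : nondecreasing_seq v.
  move=> n m nm; apply: s_noninc => //.
  by rewrite /an lef_pV2 ?posrE ?ltr0Sn // ler_nat ltnS.
have vub : has_ubound (range v).
  by exists M => _ [n _ <-]; apply: ltW; apply: H.
have hv := nondecreasing_is_cvgn vnd vub.
have hu : cvgn u.
  apply/cauchy_cvgP/cauchy_ballP => e e0.
  have e20 : 0 < e ^+ 2 by rewrite exprn_gt0.
  have hcv : cauchy (v @ \oo) by apply/cauchy_cvgP.
  move: hcv; move/cauchy_ballP/(_ _ e20).
  near_simpl; apply: filterS => -[n m] /=.
  rewrite -!ball_normE /= => hnm.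
  have := @wdist (an n) (an m) (an_gt0 n) (an_gt0 m); rewrite -/(u n) -/(u m) -/(v n) -/(v m) => h.
  have := normr_ge0 (u n - u m); move: (`|u n - u m|) h hnm => z h1 h2 z0.
  nra.
have hs1 := @s_gt0 1 ltr01.
have M0 : 0 < M by apply: lt_trans hs1 (H _ ltr01).
have hA : (A2 \o u) @ \oo --> A2 (lim (u @ \oo)).
  exact: (cvg_comp _ _ hu (hA2 _)).
have hxi : (A2 \o u) @ \oo --> xi.
  apply/cvgrPdist_lt => e e0.
  have d0 : 0 < e ^+ 2 / M by rewrite divr_gt0 // exprn_gt0.
  near=> n.
  rewrite /= Ew //.
  have -> : xi - (xi - an n *: eta (an n)) = an n *: eta (an n) by rewrite opprB addrC subrK.
  rewrite normrZ gtr0_norm //.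
  have hn : an n < e ^+ 2 / M by near: n; exact: (near_infty_natSinv_lt (PosNum d0)).
  have := H _ (an_gt0 n); rewrite s_eq // => hsM.
  have := sqr_ge0 `|w (an n)|.
  move: hn; rewrite ltr_pdivlMr // => hn.
  have := an_gt0 n; have := normr_ge0 (eta (an n)).
  move: (an n) (`|eta (an n)|) (`|w (an n)| ^+ 2) hn hsM => a z q.
  nra.
apply: hran2; exists (lim (u @ \oo)); exact: (cvg_unique _ hA hxi).
Unshelve. all: by end_near.
Qed.

Lemma s_cvg : s a @[a --> 0^'+] --> +oo.
Proof.
apply/cvgryPge => M.
have [a0 [ha0 hM]] := s_unbounded M.
near=> a; apply: le_trans hM _; apply: s_noninc.
  by near: a; exact: nbhs_right_gt.
by near: a; exact: nbhs_right_ltW ha0.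
Unshelve. all: by end_near.
Qed.
End Main.

Theorem lemmaA2 (R : realType)
  (X Y1 Y2 : completeNormedModType R)
  (ipX : inner_product X) (ipY1 : inner_product Y1) (ipY2 : inner_product Y2)
  (A1 : {linear Y1 -> X}) (A2 : {linear Y2 -> X})
  (hA1 : continuous A1) (hA2 : continuous A2)
  (A1s : X -> Y1) (A2s : X -> Y2)
  (hA1s : is_adjoint ipX ipY1 A1 A1s) (hA2s : is_adjoint ipX ipY2 A2 A2s)
  (xi : X)
  (hran1 : exists y1 : Y1, A1 y1 = xi)
  (hran2 : ~ (exists y2 : Y2, A2 y2 = xi))
  (eta : R -> X)
  (heta : forall alpha : R, 0 < alpha ->
     A2 (A2s (eta alpha)) + alpha *: eta alpha = xi) :
  let xi_ := fun alpha : R => (powR (ipX xi (eta alpha)) (3 / 4))^-1 *: eta alpha in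
  (forall alpha : R, 0 < alpha -> 0 < ipX xi (eta alpha)) /\
  (`|A1s (xi_ alpha)| @[alpha --> 0^'+] --> +oo) /\
  (A2s (xi_ alpha) @[alpha --> 0^'+] --> 0).
Proof.
move=> xi_.
have spos := @s_gt0 _ _ _ _ _ _ _ hA2s _ hran2 _ heta.
have scvg := @s_cvg _ _ _ _ _ _ _ hA2s _ hran2 _ heta hA2.
have seq := @s_eq _ _ _ _ _ _ _ hA2s _ _ heta.
set s := fun a => ipX xi (eta a) in spos scvg seq.
set p := fun a => powR (s a) (1/4).
have p0 a : 0 < a -> 0 < p a by move=> ha; rewrite powR_gt0 // spos.
have p3 a : 0 < a -> powR (ipX xi (eta a)) (3/4) = p a ^+ 3.
  move=> ha; rewrite -powR_mulrn ?powR_ge0 // -powRrM; congr powR.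
  by ring.
have p4 a : 0 < a -> s a = p a ^+ 4.
  move=> ha; rewrite -powR_mulrn ?powR_ge0 // -powRrM -[LHS]powRr1 ?ltW ?spos //.
  by congr powR; field.
have xiE a : 0 < a -> xi_ a = (p a ^+ 3)^-1 *: eta a by move=> ha; rewrite /xi_ p3.
split; first exact: spos.
have [y1 hy1] := hran1.
have y10 : 0 < `|y1|.
  rewrite normr_gt0; apply/negP => /eqP y10; apply: hran2; exists 0.
  by rewrite -hy1 y10 !linear0.
split.
  apply/cvgryPge => A.
  have := (cvgryPge _).1 scvg ((`|A| * `|y1|) ^+ 4).
  move=> hB; near=> a.
  have ha : 0 < a by near: a; exact: nbhs_right_gt.
  have sB : (`|A| * `|y1|) ^+ 4 <= s a by near: a; exact: hB.
  rewrite xiE // (@adjZ _ _ _ _ _ _ _ hA1s) normrZ gtr0_norm ?invr_gt0 ?exprn_gt0 ?p0 //.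
  have CS : s a <= `|y1| * `|A1s (eta a)|.
    by rewrite /s -hy1 hA1s ip_CS.
  have pa : `|A| * `|y1| <= p a.
    rewrite p4 // in sB.
    have pA : 0 <= `|A| * `|y1| by rewrite mulr_ge0.
    have pp : 0 <= p a by rewrite ltW // p0.
    by move: sB; rewrite ler_pXn2r ?nnegrE.
  apply: (le_trans (ler_norm A)); rewrite mulrC ler_pdivlMr ?exprn_gt0 ?p0 //.
  rewrite -(ler_pM2r y10).
  rewrite p4 // in CS.
  apply: (le_trans _ (le_trans CS _)); last by rewrite mulrC.
  have -> : `|A| * p a ^+ 3 * `|y1| = (`|A| * `|y1|) * p a ^+ 3 by ring.
  by rewrite [p a ^+ 4]exprS ler_pM2r ?exprn_gt0 ?p0.
apply/(@cvgr0Pnorm_lt _ Y2) => e e0.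
have := (cvgryPge _).1 scvg ((e^-1) ^+ 4 + 1).
move=> hB; near=> a.
have ha : 0 < a by near: a; exact: nbhs_right_gt.
have sB : (e^-1) ^+ 4 + 1 <= s a by near: a; exact: hB.
rewrite xiE // (@adjZ _ _ _ _ _ _ _ hA2s) normrZ gtr0_norm ?invr_gt0 ?exprn_gt0 ?p0 //.
have pa : e^-1 < p a.
  rewrite -(ltr_pXn2r (isT : (0 < 4)%N)); last 2 first.
  - by rewrite nnegrE invr_ge0 ltW.
  - by rewrite nnegrE ltW // p0.
  by rewrite -p4 //; apply: lt_le_trans sB; rewrite ltrDl.
have wb : `|A2s (eta a)| <= p a ^+ 2.
  rewrite -(ler_pXn2r (isT : (0 < 2)%N)); last 2 first.
  - by rewrite nnegrE.
  - by rewrite nnegrE exprn_ge0 // ltW // p0.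
  rewrite -exprM /= -p4 // /s seq //.
  rewrite lerDl; apply: mulr_ge0; [exact: ltW | exact: sqr_ge0].
rewrite ltr_pdivrMl ?exprn_gt0 ?p0 //.
apply: le_lt_trans wb _.
have -> : p a ^+ 3 * e = p a ^+ 2 * (p a * e) by ring.
rewrite ltr_pMr ?exprn_gt0 ?p0 //.
by rewrite -(ltr_pM2r e0) mulVf ?gt_eqF in pa.
Unshelve. all: by end_near.
Qed.
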